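(* Let $v^1,\dots,v^k$ be a basis of $\mathfrak h^*$, let $G=(G^{ab})$ with $G^{ab}=(v^a|v^b)$ be the Gram matrix and $(G_{ab})=G^{-1}$ its inverse. For a real root $\alpha=\sum_{a=1}^k\alpha_a v^a$ define the real $k\times k$ matrix $X(\alpha)$ by $$X(\alpha)_{ab}=-\tfrac12\alpha_a\alpha_b+\tfrac14 G_{ab}.$$ Then for all $\alpha,\beta\in\lambda$ the matrices $X(\alpha)$ are symmetric, $X(\alpha)GX(\beta)-X(\beta)GX(\alpha)=0$ if $(\alpha|\beta)=0$, and $X(\alpha)GX(\beta)+X(\beta)GX(\alpha)=\frac12X(\alpha\pm\beta)$ if $(\alpha|\beta)=\mp1$ and $\alpha\pm\beta\in\lambda$. In particular, with $\phi^a_\gamma=v^a\otimes f_\gamma$ in the Clifford algebra $\mathcal S$ defined below and $\widehat J(\alpha_i):=\sum_{a,b=1}^k\sum_{\gamma,\delta=1}^lX(\alpha_i)_{ab}\Gamma(\alpha_i)_{\gamma\delta}\phi^a_\gamma\phi^b_\delta$ (the image of $X(\alpha_i)\otimes\Gamma(\alpha_i)$ in $\mathcal S$), the assignment $X_i\mapsto\widehat J(\alpha_i)$ extends to a Lie algebra homomorphism $\mathfrak k\to(\mathcal S,[\cdot,\cdot])$, i.e. a finite-dimensional representation of $\mathfrak k$.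
   Context: Let $A=(a_{ij})_{1\le i,j\le n}$ be a symmetrizable simply laced generalized Cartan matrix (off-diagonal entries $0$ or $-1$); the Dynkin diagram has an edge between $i\ne j$ iff $a_{ij}=-1$. Let $\mathfrak g$ be the split real Kac–Moody algebra of $A$ with Chevalley generators $e_i,f_i$, Cartan subalgebra $\mathfrak h$ (from a real realization, so $\dim\mathfrak h^*=2n-\mathrm{rk}(A)$), simple roots $\alpha_1,\dots,\alpha_n\in\mathfrak h^*$, real roots $\Delta^{\mathrm{re}}$, and let $(\cdot|\cdot)$ be the nondegenerate invariant symmetric bilinear form induced on $\mathfrak h^*$, with $(\alpha_i|\alpha_j)=a_{ij}$. Let $\mathfrak k$ be the fixed-point subalgebra of the Chevalley involution ($e_i\mapsto -f_i$, $f_i\mapsto-e_i$, $h\mapsto -h$), with Berman generators $X_i=e_i-f_i$; $\mathfrak k$ is presented by generators $X_1,\dots,X_n$ and relations $[X_i,[X_i,X_j]]=-X_j$ if $a_{ij}=-1$, $[X_i,X_j]=0$ if $a_{ij}=0$. Let $\lambda$ be the set of real roots consisting of the simple roots together with all $\alpha_i+\alpha_j$ for $i,j$ forming an edge of the Dynkin diagram. A generalized spin representation is a representation $\rho$ of $\mathfrak k$ with $\rho(X_i)^2=-\frac14\mathrm{id}$. Fix a finite-dimensional real vector space $S$ with positive definite inner product $q_2$ and orthonormal basis $f_1,\dots,f_l$, and a generalized spin representation $\rho:\mathfrak k\to\mathrm{End}(S)$ whose values $\rho(X_i)$ are anti-symmetric real matrices in this basis (such exist, e.g. by realifying the generalized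 spin representations with compact image of Hainke–Köhl–Levy); put $\Gamma(\alpha_i):=2\rho(X_i)$. Let $q$ be the symmetric bilinear form on $\mathfrak h^*\otimes S$ with $q(v^a\otimes f_\gamma,v^b\otimes f_\delta)=G^{ab}\delta_{\gamma\delta}$ and $\mathcal S$ the Clifford algebra: the tensor algebra of $\mathfrak h^*\otimes S$ modulo the ideal generated by $w\otimes w-\frac12q(w,w)\cdot1$ (so $vw+wv=q(v,w)$). *)

(* Defs.v *)
From HB Require Import structures.
From mathcomp Require Import all_boot all_order all_algebra.
From mathcomp Require Import reals.
Set Implicit Arguments. Unset Strict Implicit. Unset Printing Implicit Defensive.
Import Order.TTheory GRing.Theory Num.Theory.
Local Open Scope ring_scope.

(* h^* is modelled as 'rV[R]_d (d = dim h^* = 2n - rk A); the invariant form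
   is (x|y) = x B y^T for a symmetric nondegenerate matrix B. *)
Definition bform (R : realType) (d : nat) (B : 'M[R]_d) (x y : 'rV[R]_d) : R :=
  (x *m B *m y^T) 0 0.

Definition sroot (R : realType) (n d : nat) (Al : 'M[R]_(n, d)) (i : 'I_n)
  : 'rV[R]_d := row i Al.

Definition in_lambda (R : realType) (n d : nat) (A : 'M[R]_n)
  (Al : 'M[R]_(n, d)) (x : 'rV[R]_d) : Prop :=
  (exists i, x = sroot Al i) \/
  (exists i j, A i j = -1 /\ x = sroot Al i + sroot Al j).

(* The basis v^1..v^d of h^* is given by the rows of an invertible matrix V.
   Gram matrix G^{ab} = (v^a|v^b). *)
Definition gram (R : realType) (d : nat) (V B : 'M[R]_d) : 'M[R]_d :=
  V *m B *m V^T.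

Definition coords (R : realType) (d : nat) (V : 'M[R]_d) (x : 'rV[R]_d)
  : 'rV[R]_d := x *m invmx V.

Definition Xmat (R : realType) (d : nat) (V B : 'M[R]_d) (x : 'rV[R]_d)
  : 'M[R]_d :=
  \matrix_(a < d, b < d)
    (- (2%:R^-1) * coords V x 0 a * coords V x 0 b
     + 4%:R^-1 * invmx (gram V B) a b).

Definition comm (T : pzRingType) (x y : T) : T := x * y - y * x.

Definition Jhat (R : realType) (CA : algType R) (d l : nat)
  (phi : 'I_d -> 'I_l -> CA) (X : 'M[R]_d) (Gam : 'M[R]_l) : CA :=
  \sum_(a < d) \sum_(b < d) \sum_(g < l) \sum_(h < l)
     (X a b * Gam g h) *: (phi a g * phi b h).

(* Main.v *)
Require Import Defs.
From HB Require Import structures.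
From mathcomp Require Import all_boot all_order all_algebra.
From mathcomp Require Import reals.
From mathcomp Require Import ring lra.
Import Order.TTheory GRing.Theory Num.Theory.
Local Open Scope ring_scope.
Set Implicit Arguments. Unset Strict Implicit.

Section Cliff.
Variables (R : realType) (CA : algType R) (I : finType) (psi : I -> CA) (q : I -> I -> R).
Hypothesis hq : forall i j, psi i * psi j + psi j * psi i = (q i j)%:A.

Definition Qf (P : I -> I -> R) : CA := \sum_i \sum_j P i j *: (psi i * psi j).

Lemma comm_triple i j k : psi i * psi j * psi k - psi k * (psi i * psi j)
   = q j k *: psi i - q k i *: psi j.
Proof.
have e1 : psi j * psi k = (q j k)%:A - psi k * psi j by rewrite -hq addrK.
have e2 : psi k * psi i = (q k i)%:A - psi i * psi k by rewrite -hq addrK.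
by rewrite -mulrA e1 mulrA e2 mulrBr mulrBl mulr_algr mulr_algl !mulrA opprB addrA subrK.
Qed.

Definition cc P i k := \sum_j (P i j * q j k - P j i * q k j).

Lemma comm_psi P k : comm (Qf P) (psi k) = \sum_i cc P i k *: psi i.
Proof.
transitivity (\sum_i \sum_j (P i j * q j k) *: psi i - \sum_i \sum_j (P i j * q k i) *: psi j).
  rewrite /comm /Qf mulr_suml mulr_sumr -!sumrB; apply: eq_bigr => i _.
  rewrite mulr_suml mulr_sumr -!sumrB; apply: eq_bigr => j _.
  by rewrite -scalerAl -scalerAr -scalerBr comm_triple scalerBr !scalerA.
rewrite (exchange_big _ _ _ _ _ (fun i j => (P i j * q k i) *: psi j)) -sumrB.
apply: eq_bigr => i _; rewrite /cc scaler_suml -sumrB; apply: eq_bigr => j _.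
by rewrite scalerBl.
Qed.

Lemma comm_mulr (x y z : CA) : comm x (y * z) = comm x y * z + y * comm x z.
Proof. by rewrite /comm mulrBl mulrBr !mulrA addrA subrK. Qed.

Lemma commQQ P N : comm (Qf P) (Qf N) =
  Qf (fun i l => \sum_k cc P i k * N k l) + Qf (fun k i => \sum_l N k l * cc P i l).
Proof.
have -> : comm (Qf P) (Qf N) = \sum_k \sum_l N k l *: comm (Qf P) (psi k * psi l).
  rewrite /comm {2 4}/Qf mulr_sumr mulr_suml -sumrB; apply: eq_bigr => k _.
  rewrite mulr_sumr mulr_suml -sumrB; apply: eq_bigr => l _.
  by rewrite -scalerAl -scalerAr -scalerBr.
transitivity (\sum_k \sum_l \sum_i (N k l * cc P i k) *: (psi i * psi l)
            + \sum_k \sum_l \sum_i (N k l * cc P i l) *: (psi k * psi i)).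
  rewrite -big_split; apply: eq_bigr => k _; rewrite -big_split; apply: eq_bigr => l _.
  rewrite comm_mulr !comm_psi mulr_suml mulr_sumr -big_split scaler_sumr -big_split /=.
  apply: eq_bigr => i _.
  by rewrite scalerDr -scalerAl -scalerAr !scalerA.
congr (_ + _).
  rewrite exchange_big /=.
  rewrite (eq_bigr (fun l => \sum_i \sum_k (N k l * cc P i k) *: (psi i * psi l))); last first.
    by move=> l _; rewrite exchange_big.
  rewrite exchange_big /Qf; apply: eq_bigr => i _; apply: eq_bigr => l _.
  by rewrite scaler_suml; apply: eq_bigr => k _; rewrite mulrC.
rewrite /Qf; apply: eq_bigr => k _; rewrite exchange_big; apply: eq_bigr => i _.
by rewrite scaler_suml.
Qed.
End Cliff.

Section Lin.
Variables (R : realType) (CA : algType R) (I : finType) (psi : I -> CA).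
Lemma eq_Qf P P' : (forall i j, P i j = P' i j) -> Qf psi P = Qf psi P'.
Proof. by move=> h; apply: eq_bigr => i _; apply: eq_bigr => j _; rewrite h. Qed.
Lemma Qf_add P P' : Qf psi (fun i j => P i j + P' i j) = Qf psi P + Qf psi P'.
Proof.
rewrite /Qf -big_split; apply: eq_bigr => i _; rewrite -big_split; apply: eq_bigr => j _.
by rewrite scalerDl.
Qed.
Lemma Qf_scale a P : Qf psi (fun i j => a * P i j) = a *: Qf psi P.
Proof.
rewrite /Qf scaler_sumr; apply: eq_bigr => i _; rewrite scaler_sumr; apply: eq_bigr => j _.
by rewrite scalerA.
Qed.
End Lin.

Section Tens.
Variables (R : realType) (CA : algType R) (d l : nat) (phi : 'I_d -> 'I_l -> CA) (G : 'M[R]_d).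
Hypothesis hphi : forall a b g h, phi a g * phi b h + phi b h * phi a g
                      = (G a b * (g == h)%:R)%:A.
Definition psi (p : 'I_d * 'I_l) := phi p.1 p.2.
Definition qq (p p' : 'I_d * 'I_l) := G p.1 p'.1 * (p.2 == p'.2)%:R.
Definition tens (X : 'M[R]_d) (Ga : 'M[R]_l) (p p' : 'I_d * 'I_l) := X p.1 p'.1 * Ga p.2 p'.2.

Lemma hpsi i j : psi i * psi j + psi j * psi i = (qq i j)%:A.
Proof. exact: hphi. Qed.

Lemma sum_pair (T : nmodType) (F : 'I_d * 'I_l -> T) : \sum_p F p = \sum_b \sum_h F (b,h).
Proof. by rewrite (pair_bigA _ (fun b h => F (b, h))); apply: eq_bigr => -[]. Qed.

Lemma JhatQ X Ga : Jhat phi X Ga = Qf psi (tens X Ga).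
Proof.
rewrite /Jhat /Qf sum_pair; apply: eq_bigr => a _.
rewrite exchange_big; apply: eq_bigr => g _.
rewrite sum_pair; apply: eq_bigr => b _; apply: eq_bigr => h _ //.
Qed.

Lemma sum_delta (F : 'I_l -> R) k : \sum_h F h * (h == k)%:R = F k.
Proof.
rewrite (bigD1 k) //= eqxx mulr1 big1 ?addr0 // => h /negbTE ->; by rewrite mulr0.
Qed.
Lemma sum_delta' (F : 'I_l -> R) k : \sum_h F h * (k == h)%:R = F k.
Proof. by rewrite -(sum_delta F k); apply: eq_bigr => h _; rewrite eq_sym. Qed.

Lemma entry_eq m n (M N : 'M[R]_(m,n)) i j : M = N -> M i j = N i j.
Proof. by move->. Qed.

Lemma cc_tens X Ga (hG : G^T = G) (hX : X^T = X) (hGa : Ga^T = - Ga) a g c k :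
  cc qq (tens X Ga) (a,g) (c,k) = 2%:R * (X *m G) a c * Ga g k.
Proof.
rewrite /cc sum_pair.
transitivity (\sum_b (X a b * G b c * Ga g k - X b a * G c b * Ga k g)).
  apply: eq_bigr => b _.
  rewrite sumrB /tens /qq /=.
  have -> : \sum_h X a b * Ga g h * (G b c * (h == k)%:R)
     = \sum_h (X a b * G b c * Ga g h) * (h == k)%:R.
    by apply: eq_bigr => h _; ring.
  have -> : \sum_h X b a * Ga h g * (G c b * (k == h)%:R)
     = \sum_h (X b a * G c b * Ga h g) * (k == h)%:R.
    by apply: eq_bigr => h _; ring.
  by rewrite sum_delta sum_delta'.
rewrite mxE mulr_sumr big_distrl /=; apply: eq_bigr => b _.
have e1 := entry_eq b a hX; have e2 := entry_eq c b hG; have e3 := entry_eq k g hGa.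
rewrite !mxE in e1 e2 e3; rewrite e1 e2 e3; ring.
Qed.

Lemma key X Ga Y De (hG : G^T = G) (hX : X^T = X) (hGa : Ga^T = - Ga) :
  comm (Jhat phi X Ga) (Jhat phi Y De) =
  2%:R *: (Jhat phi (X *m G *m Y) (Ga *m De) - Jhat phi (Y *m G *m X) (De *m Ga)).
Proof.
rewrite !JhatQ (commQQ hpsi) scalerBr -!Qf_scale -scaleN1r -Qf_scale.
congr (_ + _); apply: eq_Qf => -[a g] [e m].
  rewrite sum_pair /tens /=.
  set XG := X *m G.
  rewrite !mxE big_distrlr mulr_sumr /=; apply: eq_bigr => c _.
  rewrite mulr_sumr; apply: eq_bigr => k _.
  rewrite cc_tens // -/XG; ring.
rewrite sum_pair /tens /=.
have hXG : forall c, (X *m G) e c = (G *m X) c e.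
  move=> c; have := entry_eq c e (trmx_mul X G); rewrite hX hG mxE => ->.
  by rewrite mxE.
rewrite -mulmxA !mxE big_distrlr !mulr_sumr /=; apply: eq_bigr => c _.
rewrite !mulr_sumr; apply: eq_bigr => k _.
have e3 := entry_eq k m hGa; rewrite !mxE in e3.
rewrite cc_tens // hXG e3; ring.
Qed.

End Tens.

Lemma Jhat_lin (R : realType) (CA : algType R) d l (phi : 'I_d -> 'I_l -> CA) a X Y Ga :
  Jhat phi (a *: X + Y) Ga = a *: Jhat phi X Ga + Jhat phi Y Ga.
Proof.
rewrite !JhatQ -(Qf_scale (psi phi) a (tens X Ga)) -Qf_add; apply: eq_Qf => i j; rewrite /tens !mxE; ring.
Qed.
Lemma Jhat_oppG (R : realType) (CA : algType R) d l (phi : 'I_d -> 'I_l -> CA) X Ga :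
  Jhat phi X (- Ga) = - Jhat phi X Ga.
Proof.
rewrite !JhatQ -[RHS]scaleN1r -(Qf_scale (psi phi) (-1) (tens X Ga)); apply: eq_Qf => i j; rewrite /tens !mxE; ring.
Qed.

Section Mat.
Variables (R : realType) (d : nat) (G Gi : 'M[R]_d).
Hypothesis hGiG : Gi *m G = 1%:M.
Hypothesis hGGi : G *m Gi = 1%:M.
Definition Xf (c : 'rV[R]_d) := - 2%:R^-1 *: (c^T *m c) + 4%:R^-1 *: Gi.

Lemma XGX c e : Xf c *m G *m Xf e = ((c *m G *m e^T) 0 0 / 4%:R) *: (c^T *m e)
  - 8%:R^-1 *: (c^T *m c) - 8%:R^-1 *: (e^T *m e) + 16%:R^-1 *: Gi.
Proof.
set s := (c *m G *m e^T) 0 0.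
have hs : c *m G *m e^T = s%:M by apply: mx11_scalar.
have h1 : Xf c *m G = - 2%:R^-1 *: (c^T *m c *m G) + 4%:R^-1 *: 1%:M.
  by rewrite /Xf mulmxDl -!scalemxAl hGiG.
have h2 : c^T *m c *m G *m (e^T *m e) = s *: (c^T *m e).
  by rewrite !mulmxA -(mulmxA _ c) -(mulmxA _ (c *m G)) hs mul_mx_scalar scalemxAl.
have h3 : c^T *m c *m G *m Gi = c^T *m c by rewrite -mulmxA hGGi mulmx1.
rewrite h1 /Xf mulmxDl !mulmxDr -!scalemxAl -!scalemxAr h2 h3 !mul1mx.
apply/matrixP => i j; rewrite !mxE.
by field.
Qed.
Hypothesis hG : G^T = G.
Hypothesis hGi : Gi^T = Gi.

Lemma Xf_sym c : (Xf c)^T = Xf c.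
Proof.
apply/matrixP => i j; rewrite !mxE !big_ord1 !mxE.
have := entry_eq j i hGi; rewrite mxE => ->; ring.
Qed.

Lemma s_sym (c e : 'rV[R]_d) : (e *m G *m c^T) 0 0 = (c *m G *m e^T) 0 0.
Proof.
have E : (c *m G *m e^T)^T = e *m G *m c^T by rewrite !trmx_mul trmxK hG mulmxA.
by rewrite -E mxE.
Qed.

Lemma part1 (c e : 'rV[R]_d) :
 [/\ (c *m G *m e^T) 0 0 = 0 -> Xf c *m G *m Xf e - Xf e *m G *m Xf c = 0,
     (c *m G *m e^T) 0 0 = -1 -> Xf c *m G *m Xf e + Xf e *m G *m Xf c = 2%:R^-1 *: Xf (c + e)
   & (c *m G *m e^T) 0 0 = 1 -> Xf c *m G *m Xf e + Xf e *m G *m Xf c = 2%:R^-1 *: Xf (c - e)].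
Proof.
split => hs; rewrite !XGX (s_sym c e) hs; apply/matrixP => i j; rewrite /Xf !mxE !big_ord1 !mxE;
  by field.
Qed.
End Mat.

Lemma Jhat_add (R : realType) (CA : algType R) d l (phi : 'I_d -> 'I_l -> CA) X Y Ga :
  Jhat phi (X + Y) Ga = Jhat phi X Ga + Jhat phi Y Ga.
Proof. by rewrite -[Jhat phi X Ga]scale1r -Jhat_lin scale1r. Qed.
Lemma Jhat_scale (R : realType) (CA : algType R) d l (phi : 'I_d -> 'I_l -> CA) a X Ga :
  Jhat phi (a *: X) Ga = a *: Jhat phi X Ga.
Proof.
rewrite !JhatQ -(Qf_scale (psi phi) a (tens X Ga)); apply: eq_Qf => i j; rewrite /tens !mxE; ring.
Qed.

Lemma gsq (R : realType) l (g : 'M[R]_l) :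
  (2%:R^-1 *: g) *m (2%:R^-1 *: g) = - (4%:R^-1 *: 1%:M) -> g *m g = - 1%:M.
Proof.
rewrite -scalemxAl -scalemxAr scalerA => E.
apply/matrixP => a b; have := entry_eq a b E; rewrite !mxE => E'.
have h4 : (4%:R : R) = 2%:R * 2%:R by rewrite -natrM.
rewrite h4 invfM in E'.
have h2 : (2%:R : R)^-1 != 0 by rewrite invr_eq0 pnatr_eq0.
have := mulfI (mulf_neq0 h2 h2); apply; rewrite E'; ring.
Qed.

Lemma ganti (R : realType) l (gi gj : 'M[R]_l) :
  gi *m gi = - 1%:M ->
  (let r := fun k => 2%:R^-1 *: k in
     r gi *m (r gi *m r gj - r gj *m r gi) - (r gi *m r gj - r gj *m r gi) *m r gi
       = - r gj) ->
  gi *m gj *m gi = gj /\ gj *m gi = - (gi *m gj).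
Proof.
move=> hsq /= E.
rewrite !mulmxBr !mulmxBl -!scalemxAl -!scalemxAr !scalerA !mulmxA -!scalemxAl !scalerA in E.
rewrite hsq -(mulmxA gj gi gi) hsq mulNmx mul1mx mulmxN mulmx1 in E.
have T : gi *m gj *m gi = gj.
  apply/matrixP => a b; have := entry_eq a b E; rewrite !mxE => E'.
  lra.
split => //.
have := congr1 (mulmx gi) T.
by rewrite !mulmxA hsq mulNmx mul1mx mulNmx => <-; rewrite opprK.
Qed.

Unset Implicit Arguments.
Set Strict Implicit.

Theorem proposition5p1 (R : realType) (n : nat) (A : 'M[R]_n)
  (* simply laced (symmetric) generalized Cartan matrix *)
  (hAdiag : forall i, A i i = 2%:R)
  (hAoff : forall i j, i != j -> A i j = 0 \/ A i j = -1)
  (hAsym : forall i j, A i j = A j i)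
  (* realization: h^* = 'rV_d, d = 2n - rk A, invariant form B,
     linearly independent simple roots (rows of Al) with (a_i|a_j) = a_ij *)
  (d : nat) (hd : d = (2 * n - \rank A)%N)
  (B : 'M[R]_d) (hBsym : B^T = B) (hBnd : B \in unitmx)
  (Al : 'M[R]_(n, d)) (hAlfree : row_free Al)
  (hAlform : forall i j, bform B (sroot Al i) (sroot Al j) = A i j)
  (* basis v^1..v^d of h^* (rows of V) *)
  (V : 'M[R]_d) (hV : V \in unitmx)
  (* generalized spin representation rho(X_i) = 1/2 Gam i on R^l,
     anti-symmetric in the orthonormal basis f_1..f_l *)
  (l : nat) (Gam : 'I_n -> 'M[R]_l)
  (hGanti : forall i, (Gam i)^T = - Gam i)
  (hGsq : forall i, (2%:R^-1 *: Gam i) *m (2%:R^-1 *: Gam i)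
                    = - (4%:R^-1 *: 1%:M))
  (hGrel1 : forall i j, A i j = -1 ->
     let r := fun k => 2%:R^-1 *: Gam k in
     r i *m (r i *m r j - r j *m r i) - (r i *m r j - r j *m r i) *m r i
       = - r j)
  (hGrel0 : forall i j, A i j = 0 ->
     let r := fun k => 2%:R^-1 *: Gam k in
     r i *m r j - r j *m r i = 0) :
  let G := gram V B in
  (forall x y, in_lambda A Al x -> in_lambda A Al y ->
     [/\ (Xmat V B x)^T = Xmat V B x,
         bform B x y = 0 ->
           Xmat V B x *m G *m Xmat V B y - Xmat V B y *m G *m Xmat V B x = 0,
         bform B x y = -1 -> in_lambda A Al (x + y) ->
           Xmat V B x *m G *m Xmat V B y + Xmat V B y *m G *m Xmat V B x
             = 2%:R^-1 *: Xmat V B (x + y)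
       & bform B x y = 1 -> in_lambda A Al (x - y) ->
           Xmat V B x *m G *m Xmat V B y + Xmat V B y *m G *m Xmat V B x
             = 2%:R^-1 *: Xmat V B (x - y)]) /\
  (* in any associative R-algebra generated by phi^a_g subject to the
     Clifford relations phi phi' + phi' phi = q(phi, phi') (in particular in
     the Clifford algebra S), the elements J i := \hat J(alpha_i) satisfy the
     defining relations of k, i.e. X_i |-> J i extends to a Lie algebra
     homomorphism k -> (S, [.,.]). *)
  (forall (CA : algType R) (phi : 'I_d -> 'I_l -> CA),
     (forall a b g h, phi a g * phi b h + phi b h * phi a g
                      = (G a b * (g == h)%:R)%:A) ->
     let J := fun i => Jhat phi (Xmat V B (sroot Al i)) (Gam i) in
     (forall i j, A i j = -1 -> comm (J i) (comm (J i) (J j)) = - J j) /\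
     (forall i j, A i j = 0 -> comm (J i) (J j) = 0)).
Proof.
move=> G.
have hGu : G \in unitmx by rewrite /G /gram !unitmx_mul unitmx_tr hV hBnd.
set Gi := invmx G.
have hGiG : Gi *m G = 1%:M by rewrite mulVmx.
have hGGi : G *m Gi = 1%:M by rewrite mulmxV.
have hG : G^T = G by rewrite /G /gram !trmx_mul trmxK hBsym mulmxA.
have hGi : Gi^T = Gi by rewrite /Gi trmx_inv hG.
have hXm : forall x, Xmat V B x = Xf Gi (coords V x).
  by move=> x; apply/matrixP => a b; rewrite /Xf /Gi /G !mxE big_ord1 !mxE; ring.
have hbf : forall x y, bform B x y = (coords V x *m G *m (coords V y)^T) 0 0.
  move=> x y; rewrite /bform /G /gram /coords trmx_mul !mulmxA mulmxKV //.
  have hVV : V^T *m (invmx V)^T = 1%:M by rewrite -trmx_mul mulVmx // trmx1.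
  by rewrite -(mulmxA (x *m B)) hVV mulmx1.
have coD : forall x y, coords V (x + y) = coords V x + coords V y.
  by move=> x y; rewrite /coords mulmxDl.
have coB : forall x y, coords V (x - y) = coords V x - coords V y.
  by move=> x y; rewrite /coords mulmxBl.
have bfD : forall x y z, bform B (x + y) z = bform B x z + bform B y z.
  by move=> x y z; rewrite /bform !mulmxDl mxE.
have P1 := part1 hGiG hGGi hG.
split.
  move=> x y _ _; rewrite !hXm !hbf coD coB.
  have [h0 h1 h2] := P1 (coords V x) (coords V y).
  split; [exact: (Xf_sym hGi) | exact: h0 | move=> ? _; exact: h1 | move=> ? _; exact: h2].
move=> CA phi hphi J.
have hJ : forall i, J i = Jhat phi (Xf Gi (coords V (sroot Al i))) (Gam i).
  by move=> i; rewrite /J hXm.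
have hsq : forall i, Gam i *m Gam i = - 1%:M by move=> i; apply: gsq; exact: hGsq.
have h2 : (2%:R : R) != 0 by rewrite pnatr_eq0.
split.
  move=> i j hij.
  have [T anti] := ganti (hsq i) (hGrel1 i j hij).
  set ci := coords V (sroot Al i); set cj := coords V (sroot Al j).
  have [_ s1 _] := P1 ci cj.
  have hs1 : (ci *m G *m cj^T) 0 0 = -1 by rewrite -hbf hAlform.
  have [_ _ s2] := P1 (ci + cj) ci.
  have hs2 : ((ci + cj) *m G *m ci^T) 0 0 = 1.
    rewrite -coD -hbf bfD !hAlform hAdiag (hAsym j i) hij; ring.
  have C1 : comm (J i) (J j) = Jhat phi (Xf Gi (ci + cj)) (Gam i *m Gam j).
    rewrite !hJ (key hphi) ?(Xf_sym hGi) // anti Jhat_oppG opprK -Jhat_add (s1 hs1).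
    by rewrite Jhat_scale scalerA mulfV // scale1r.
  rewrite C1 hJ (key hphi) ?(Xf_sym hGi) //.
  rewrite mulmxA hsq mulNmx mul1mx T Jhat_oppG -opprD -Jhat_add addrC (s2 hs2).
  by rewrite (addrC ci cj) addrK Jhat_scale scalerN scalerA mulfV // scale1r hJ.
move=> i j hij.
set ci := coords V (sroot Al i); set cj := coords V (sroot Al j).
have [s0 _ _] := P1 ci cj.
have hs0 : (ci *m G *m cj^T) 0 0 = 0 by rewrite -hbf hAlform.
have eX := s0 hs0; move/eqP: eX; rewrite subr_eq0 => /eqP eX.
have eG := hGrel0 i j hij; rewrite /= -!scalemxAl -!scalemxAr !scalerA -scalerBr in eG.
move/eqP: eG; rewrite scaler_eq0 mulf_eq0 invr_eq0 (negbTE h2) /= subr_eq0 => /eqP eG.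
by rewrite !hJ (key hphi) ?(Xf_sym hGi) // -/ci -/cj eX eG subrr scaler0.
Qed.
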